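(* Let $\mathcal I$ be a canonical instance with groups $G_1,\dots,G_k$ and group weights $w_1>\cdots>w_k$, group sizes $n_1,\dots,n_k$, $W_i=n_iw_i$, and define $L_1=0$ and $L_r=\frac{\sum_{j<r}W_j}{w_r}$ for $r=2,\dots,k$. Then for every agent $a_{i,j}$, every $r\in[k]$ and every item $e_h$ with $h>L_r$, we have $v_{i,j}(e_h)\le w_r$.
   Context: Chore-allocation instance: agents, a finite set $\mathcal M=\{e_1,\dots,e_m\}$ of indivisible items, positive weights, additive cost functions $v:2^{\mathcal M}\to\mathbb R_{\ge0}$. The weighted maximin share of agent $a$ with weight $w_a$ and cost $v_a$ is $\mathsf{WMMS}_a=w_a\min_{\text{allocations }(B_b)_b}\max_{b}\frac{v_a(B_b)}{w_b}$, where allocations are ordered partitions of $\mathcal M$ into one (possibly empty) bundle per agent. An instance is canonical if: (i) $\max$ weight is $w_1$, weights sum to $1$, and every weight equals $w_1/2^p$ for some nonnegative integer $p$; (ii) every agent's total cost $v(\mathcal M)=1$, and every single-item cost is either $0$ or $w_1/2^p$ for some nonnegative integer $p$; (iii) every agent has $v(e_1)\ge\cdots\ge v(e_m)$; (iv) every agent's $\mathsf{WMMS}$ equals her weight. Agents are partitioned into groups $G_1,\dots,G_k$ by weight, all agents of $G_i$ having weight $w_i$, with $w_1>w_2>\cdots>w_k$; $G_i=\{a_{i,1},\dots,a_{i,n_i}\}$ and $v_{i,j}$ is the cost function of $a_{i,j}$. *)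

(* Defs.v *)
From mathcomp Require Import all_boot all_order all_algebra.
Set Implicit Arguments. Unset Strict Implicit. Unset Printing Implicit Defensive.
Import Order.TTheory GRing.Theory Num.Theory.
Local Open Scope ring_scope.

(* Agents are 'I_n, items are 'I_m (item e_{h} is the ordinal h-1).
   w : agent weights; v a e : cost of the single item e for agent a.     *)

Section Defs.
Variables (R : realFieldType) (n m : nat).

Definition cost (v : 'I_n -> 'I_m -> R) (a : 'I_n) (S : {set 'I_m}) : R :=
  \sum_(e in S) v a e.

Definition bundle (A : {ffun 'I_m -> 'I_n}) (b : 'I_n) : {set 'I_m} :=
  [set e | A e == b].

(* max_b v_a(B_b)/w_b for allocation A (all terms are >= 0) *)
Definition alloc_val (w : 'I_n -> R) (v : 'I_n -> 'I_m -> R) (a : 'I_n)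
    (A : {ffun 'I_m -> 'I_n}) : R :=
  \big[Num.max/0]_(b : 'I_n) (cost v a (bundle A b) / w b).

(* min over all allocations; the neutral element is an upper bound on every
   alloc_val (for positive weights and nonnegative costs), so this is exactly
   the minimum whenever an allocation exists. *)
Definition WMMS (w : 'I_n -> R) (v : 'I_n -> 'I_m -> R) (a : 'I_n) : R :=
  w a * \big[Num.min/(\sum_(b : 'I_n) cost v a setT / w b)]_(A : {ffun 'I_m -> 'I_n})
          alloc_val w v a A.

Definition wmax (w : 'I_n -> R) : R := \big[Num.max/0]_(a : 'I_n) w a.

Definition dyadic_of (x y : R) : Prop := exists p : nat, y = x / 2%:R ^+ p.

Definition canonical_instance (w : 'I_n -> R) (v : 'I_n -> 'I_m -> R) : Prop :=
  [/\ (forall a, 0 < w a) /\ (forall a e, 0 <= v a e),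
      (and (\sum_(a : 'I_n) w a = 1) (forall a, dyadic_of (wmax w) (w a))),
      (and (forall a, cost v a setT = 1)
       (forall a e, or (v a e = 0) (dyadic_of (wmax w) (v a e)))),
      (forall a (e e' : 'I_m), (e <= e')%N -> v a e' <= v a e) &
      (forall a, WMMS w v a = w a)].

(* For the group G_r whose common weight is w b:
   W-sum of all strictly heavier groups = \sum_{j<r} W_j, so
   L_r = (\sum_{c : w c > w b} w c) / w b  (and L_1 = 0). *)
Definition Lgroup (w : 'I_n -> R) (b : 'I_n) : R :=
  (\sum_(c : 'I_n | w b < w c) w c) / w b.

End Defs.

(* Main.v *)
Require Import Defs.
From mathcomp Require Import all_boot all_order all_algebra.
Import Order.TTheory GRing.Theory Num.Theory.
Local Open Scope ring_scope.
Lemma cost_ge0 (R : realFieldType) n m (v : 'I_n -> 'I_m -> R) a S :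
  (forall e, 0 <= v a e) -> 0 <= cost v a S.
Proof. by move=> H; apply: sumr_ge0. Qed.

Lemma cost_sub (R : realFieldType) n m (v : 'I_n -> 'I_m -> R) a (S T : {set 'I_m}) :
  (forall e, 0 <= v a e) -> S \subset T -> cost v a S <= cost v a T.
Proof.
move=> H sST; rewrite /cost [X in _ <= X](big_setID S) /= (setIidPr sST).
by rewrite lerDl sumr_ge0.
Qed.

Lemma exists_good (R : realFieldType) n m (w : 'I_n -> R) (v : 'I_n -> 'I_m -> R) a :
  (forall c, 0 < w c) -> (forall e, 0 <= v a e) -> WMMS w v a = w a ->
  exists A, forall c, cost v a (bundle A c) <= w c.
Proof.
move=> wpos vpos HW.
have H1 : \big[Num.min/(\sum_(b : 'I_n) cost v a setT / w b)]_(A : {ffun 'I_m -> 'I_n})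
          alloc_val w v a A = 1.
  by apply: (mulfI (lt0r_neq0 (wpos a))); rewrite mulr1.
case: (boolP [exists A, alloc_val w v a A <= 1]).
  move=> /existsP [A HA]; exists A => c.
  have : cost v a (bundle A c) / w c <= 1.
    apply: le_trans HA; rewrite /alloc_val.
    exact: le_bigmax.
  by rewrite ler_pdivrMr // mul1r.
rewrite negb_exists => /forallP Hall.
exfalso.
pose A0 : {ffun 'I_m -> 'I_n} := [ffun=> a].
have hA0 : alloc_val w v a A0 <= \sum_(b : 'I_n) cost v a setT / w b.
  rewrite /alloc_val; apply/bigmax_leP; split.
    by apply: sumr_ge0 => b _; rewrite divr_ge0 // ?cost_ge0 // ltW.
  move=> c _; apply: le_trans (_ : cost v a setT / w c <= _).
    by rewrite ler_pM2r ?invr_gt0 // cost_sub // subsetT.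
  rewrite (bigD1 c) //= lerDl sumr_ge0 // => b _.
  by rewrite divr_ge0 // ?cost_ge0 // ltW.
have : 1 < \big[Num.min/(\sum_(b : 'I_n) cost v a setT / w b)]_(A : {ffun 'I_m -> 'I_n})
          alloc_val w v a A.
  apply/bigmin_gtP; split.
    by apply: lt_le_trans hA0; rewrite ltNge Hall.
  by move=> A _; rewrite ltNge Hall.
by rewrite H1 ltxx.
Qed.

Theorem mainTheorem7 (R : realFieldType) (n m : nat)
    (w : 'I_n -> R) (v : 'I_n -> 'I_m -> R) :
  canonical_instance w v ->
  forall (a b : 'I_n) (h : 'I_m),
    Lgroup w b < (nat_of_ord h).+1%:R -> v a h <= w b.
Proof.
move=> [[wpos vpos] _ _ mono HW] a b h HL.
have [A HA] := @exists_good _ _ _ w v a wpos (vpos a) (HW a).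
rewrite leNgt; apply/negP => Hlt.
pose S := [set e : 'I_m | (e <= h)%N].
have Hlow : (h.+1)%:R * w b < \sum_(e in S) v a e.
  apply: lt_le_trans (_ : \sum_(e in S) v a h <= _).
    rewrite sumr_const.
    have -> : #|S| = h.+1.
      have -> : S = widen_ord (ltn_ord h) @: [set: 'I_h.+1].
        apply/setP => e; rewrite !inE; apply/idP/imsetP.
          by move=> he; exists (Ordinal (he : (e < h.+1)%N)); rewrite ?inE //; apply: val_inj.
        by move=> [x _ ->] /=; rewrite -ltnS ltn_ord.
      by rewrite card_imset ?cardsT ?card_ord //; by move=> x y /(congr1 val) /= /val_inj.
    by rewrite -[X in _ < X]mulr_natl (ltr_pM2l (ltr0Sn _ _)).
  by apply: ler_sum => e; rewrite inE => /(mono a).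
have Hup : \sum_(e in S) v a e <= \sum_(c : 'I_n | w b < w c) w c.
  rewrite (partition_big A predT) //= [X in _ <= X]big_mkcond /=.
  apply: ler_sum => c _.
  have Hc : \sum_(e in S | A e == c) v a e <= cost v a (bundle A c).
    rewrite /cost [X in _ <= X]big_mkcond [X in X <= _]big_mkcond /=.
    apply: ler_sum => e _; rewrite /bundle !inE.
    by case: (e <= h)%N; case: (A e == c); rewrite /= ?lexx ?vpos.
  case: ifP => Hwc; first exact: le_trans Hc (HA c).
  apply: le_trans (_ : \sum_(e in S | A e == c) 0 <= _); last by rewrite big1.
  apply: ler_sum => e /andP [eS /eqP Aec].
  exfalso.
  have : v a e <= cost v a (bundle A c).
    by rewrite /cost (bigD1 e) ?inE ?Aec //= lerDl sumr_ge0.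
  move: eS; rewrite inE => /(mono a) Hm.
  move: (HA c); move/negbT: Hwc; rewrite -leNgt => Hwc Hc' Hve.
  have H2 := le_trans Hve Hc'.
  have H3 := lt_le_trans (le_lt_trans Hwc Hlt) Hm.
  by have := lt_le_trans H3 H2; rewrite ltxx.
move: HL; rewrite /Lgroup ltr_pdivrMr // => HL.
have := lt_trans (le_lt_trans Hup HL) Hlow; by rewrite ltxx.
Qed.
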